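(* Let $n\ge 1$, $k\ge 2$, let $\mathbb{V}_n$ be an $n$-dimensional vector space over $\mathbb{F}_2$ with an inner product $u\cdot x$, and let $f:\mathbb{V}_n\to\mathbb{Z}_{2^k}$ be written as $f(x)=a_0(x)+2a_1(x)+\cdots+2^{k-1}a_{k-1}(x)$ with Boolean functions $a_j:\mathbb{V}_n\to\mathbb{F}_2$. For $0\le i\le 2^{k-1}-1$ with $i=\sum_{j=0}^{k-2}i_j2^j$, $i_j\in\{0,1\}$, let $g_i=a_{k-1}\oplus i_0a_0\oplus i_1a_1\oplus\cdots\oplus i_{k-2}a_{k-2}$, and for $u\in\mathbb{V}_n$ let $\mathcal{W}(u)=(\mathcal{W}_{g_0}(u),\mathcal{W}_{g_1}(u),\ldots,\mathcal{W}_{g_{2^{k-1}-1}}(u))$. (i) If $n$ is even, then $f$ is gbent if and only if every $g_i$ ($0\le i\le 2^{k-1}-1$) is bent and for every $u\in\mathbb{V}_n$ we have $\mathcal{W}(u)=\pm 2^{n/2}H_{2^{k-1}}^{(r)}$ for some $r\in\{0,\ldots,2^{k-1}-1\}$ (depending on $u$). (ii) If $n$ is odd, then $f$ is gbent if and only if every $g_i$ is semi-bent and for every $u\in\mathbb{V}_n$ we have $\mathcal{W}(u)=(\pm 2^{\frac{n+1}{2}}H^{(r)}_{2^{k-2}},\mathbf{0}_{2^{k-2}})$ or $\mathcal{W}(u)=(\mathbf{0}_{2^{k-2}},\pm 2^{\frac{n+1}{2}}H^{(r)}_{2^{k-2}})$ for some $r\in\{0,\ldots,2^{k-2}-1\}$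 (depending on $u$), where $\mathbf{0}_{2^{k-2}}$ is the all-zero vector of length $2^{k-2}$.
   Context: For a Boolean function $g:\mathbb{V}_n\to\mathbb{F}_2$, $\mathcal{W}_g(u)=\sum_{x\in\mathbb{V}_n}(-1)^{g(x)\oplus u\cdot x}$. $g$ is bent if $|\mathcal{W}_g(u)|=2^{n/2}$ for all $u$; for odd $n$, $g$ is semi-bent if $\mathcal{W}_g(u)\in\{0,\pm2^{\frac{n+1}{2}}\}$ for all $u$. For $f:\mathbb{V}_n\to\mathbb{Z}_{2^k}$ the generalized Walsh–Hadamard transform is $\mathcal{H}_f(u)=\sum_{x\in\mathbb{V}_n}\zeta_{2^k}^{f(x)}(-1)^{u\cdot x}$ with $\zeta_{2^k}=e^{2\pi i/2^k}$, and $f$ is gbent if $|\mathcal{H}_f(u)|=2^{n/2}$ for all $u\in\mathbb{V}_n$. $H_{2^m}$ denotes the Sylvester–Hadamard matrix ($H_1=(1)$, $H_{2^m}=\begin{pmatrix}H_{2^{m-1}}&H_{2^{m-1}}\\H_{2^{m-1}}&-H_{2^{m-1}}\end{pmatrix}$), rows indexed from $0$, $H_{2^m}^{(r)}$ its $r$-th row. *)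

(* Defs.v *)
From mathcomp Require Import all_boot all_order all_algebra all_field.
Set Implicit Arguments. Unset Strict Implicit. Unset Printing Implicit Defensive.
Import Order.TTheory GRing.Theory Num.Theory.
Local Open Scope ring_scope.

(* V_n = F_2^n, with F_2 represented by bool (addition = xor, product = &&). *)
Definition Vn (n : nat) := {ffun 'I_n -> bool}.

Definition dotv n (u x : Vn n) : bool := \big[addb/false]_(i < n) (u i && x i).

Definition walsh n (g : Vn n -> bool) (u : Vn n) : int :=
  \sum_(x : Vn n) (-1) ^+ (g x (+) dotv u x).

Definition bent n (g : Vn n -> bool) : Prop :=
  forall u, `|(walsh g u)%:~R : algC| = sqrtC (2 ^+ n).

Definition semibent n (g : Vn n -> bool) : Prop :=
  forall u, walsh g u \in [:: 0; 2 ^+ ((n + 1) %/ 2); - 2 ^+ ((n + 1) %/ 2)].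

(* zeta_{2^k} = e^{2 pi i / 2^k}: the 2^(k-1)-th root of -1 with minimal
   argument, i.e. e^{i pi / 2^(k-1)} *)
Definition zeta (k : nat) : algC := (2 ^ k.-1)%N.-root (-1).

Definition gwalsh n k (f : Vn n -> 'I_(2 ^ k)) (u : Vn n) : algC :=
  \sum_(x : Vn n) zeta k ^+ (f x) * (-1) ^+ (dotv u x).

Definition gbent n k (f : Vn n -> 'I_(2 ^ k)) : Prop :=
  forall u, `|gwalsh f u| = sqrtC (2 ^+ n).

(* j-th binary digit a_j of f: f(x) = sum_j 2^j a_j(x) *)
Definition comp n k (f : Vn n -> 'I_(2 ^ k)) (j : nat) (x : Vn n) : bool :=
  odd (f x %/ 2 ^ j).

Definition gi n k (f : Vn n -> 'I_(2 ^ k)) (i : nat) (x : Vn n) : bool :=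
  comp f k.-1 x (+) \big[addb/false]_(j < k.-1) (odd (i %/ 2 ^ j) && comp f j x).

(* entry (r, c) of the Sylvester-Hadamard matrix H_{2^m}, defined by the
   block recursion H_{2^{m+1}} = [[H, H], [H, -H]] *)
Fixpoint sylv (m r c : nat) : int :=
  match m with
  | 0 => 1
  | m'.+1 =>
      let h := (2 ^ m')%N in
      (if (h <= r)%N && (h <= c)%N then -1 else 1) * sylv m' (r %% h) (c %% h)
  end.

(* Main.v *)
Require Import Defs.
From mathcomp Require Import all_boot all_order all_algebra all_field.
Set Implicit Arguments. Unset Strict Implicit. Unset Printing Implicit Defensive.
Import Order.TTheory GRing.Theory Num.Theory.
Local Open Scope ring_scope.
Definition evz (z : algC) (p : {poly int}) : algC := (map_poly intr p).[z].

Lemma evzM z p q : evz z (p * q) = evz z p * evz z q.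
Proof. by rewrite /evz rmorphM hornerM. Qed.
Lemma evzD z p q : evz z (p + q) = evz z p + evz z q.
Proof. by rewrite /evz rmorphD hornerD. Qed.
Lemma evzB z p q : evz z (p - q) = evz z p - evz z q.
Proof. by rewrite /evz rmorphB hornerD hornerN. Qed.
Lemma evzC z a : evz z a%:P = a%:~R.
Proof. by rewrite /evz map_polyC hornerC. Qed.
Lemma evzX z : evz z 'X = z.
Proof. by rewrite /evz map_polyX hornerX. Qed.
Lemma evzXn z n : evz z 'X^n = z ^+ n.
Proof. by rewrite /evz map_polyXn hornerXn. Qed.

Lemma lin_indep m z : (2 ^ m.+1).-primitive_root z ->
  forall p : {poly int}, (size p <= 2 ^ m)%N -> evz z p = 0 -> p = 0.
Proof.
move=> prim p sp ep.
have szm : size (minCpoly z) = (2 ^ m).+1.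
  rewrite (minCpoly_cyclotomic prim) size_cyclotomic totient_pfactor //=; by rewrite mul1n.
have [pm [Dpm _] dv] := minCpolyP z.
have e1 : map_poly ratr (map_poly intr p : {poly rat}) = map_poly intr p :> {poly algC}.
  rewrite -map_poly_comp; apply: eq_map_poly => a /=; exact: ratr_int.
have : root (map_poly ratr (map_poly intr p : {poly rat})) z.
  by rewrite e1 /root -/(evz z p) ep.
rewrite dv => hd.
have szp : size (map_poly intr p : {poly rat}) = size p.
  by apply: size_map_inj_poly => //; exact: intr_inj.
apply/eqP; apply/negPn/negP => nz.
have nz' : (map_poly intr p : {poly rat}) != 0 by rewrite -size_poly_eq0 szp size_poly_eq0.
have := dvdp_leq nz' hd.
rewrite -(size_map_poly (ratr : rat -> algC)) -Dpm szm szp.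
by rewrite ltnNge sp.
Qed.

Lemma Xn1_monic N : (0 < N)%N -> ('X^N + 1 : {poly int}) \is monic.
Proof. by move=> h; rewrite -[1]/(1%:P) monicXnaddC. Qed.

Lemma ML m z : (2 ^ m.+1).-primitive_root z -> z ^+ (2 ^ m) = -1 ->
  forall p : {poly int}, evz z p = 0 -> exists q, p = q * ('X^(2 ^ m) + 1).
Proof.
move=> prim zN p ep.
have N0 : (0 < 2 ^ m)%N by rewrite expn_gt0.
have mon := Xn1_monic N0.
have Dp := Pdiv.RingMonic.rdivp_eq mon p.
exists (Pdiv.CommonRing.rdivp p ('X^(2 ^ m) + 1)).
suff e : Pdiv.CommonRing.rmodp p ('X^(2 ^ m) + 1) = 0 by rewrite {1}Dp e addr0.
apply: (lin_indep prim).
  have := Pdiv.CommonRing.ltn_rmodp p ('X^(2 ^ m) + 1).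
  rewrite -[1]/(1%:P) size_XnaddC // monic_neq0 //.
have -> : Pdiv.CommonRing.rmodp p ('X^(2 ^ m) + 1) = p - Pdiv.CommonRing.rdivp p ('X^(2 ^ m) + 1) * ('X^(2 ^ m) + 1).
  by rewrite {2}Dp addrAC subrr add0r.
by rewrite evzB evzM evzD evzXn zN /evz rmorph1 hornerC addNr mulr0 subr0.
Qed.
From mathcomp Require Import ring.

Definition Zz (z x : algC) := exists p, x = evz z p.

Lemma Zz_int z (a : int) : Zz z a%:~R.
Proof. by exists a%:P; rewrite evzC. Qed.
Lemma Zz_0 z : Zz z 0. Proof. exact: (Zz_int z 0). Qed.
Lemma Zz_1 z : Zz z 1. Proof. exact: (Zz_int z 1). Qed.
Lemma Zz_2 z : Zz z 2. Proof. exact: (Zz_int z 2). Qed.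
Lemma Zz_z z : Zz z z. Proof. by exists 'X; rewrite evzX. Qed.
Lemma Zz_D z x y : Zz z x -> Zz z y -> Zz z (x + y).
Proof. by move=> [p ->] [q ->]; exists (p + q); rewrite evzD. Qed.
Lemma Zz_M z x y : Zz z x -> Zz z y -> Zz z (x * y).
Proof. by move=> [p ->] [q ->]; exists (p * q); rewrite evzM. Qed.
Lemma Zz_N z x : Zz z x -> Zz z (- x).
Proof. by move=> [p ->]; exists (- p); rewrite /evz rmorphN hornerN. Qed.
Lemma Zz_B z x y : Zz z x -> Zz z y -> Zz z (x - y).
Proof. by move=> hx hy; apply: Zz_D => //; apply: Zz_N. Qed.
Lemma Zz_X z x n : Zz z x -> Zz z (x ^+ n).
Proof. by move=> hx; elim: n => [|n IH]; [exact: Zz_1 | rewrite exprS; apply: Zz_M]. Qed.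
Lemma Zz_sum z (I : finType) (F : I -> algC) : (forall i, Zz z (F i)) -> Zz z (\sum_i F i).
Proof. by move=> h; apply: (big_ind (Zz z)) => //; [exact: Zz_0 | exact: Zz_D]. Qed.

Lemma Zz_ev z w p : Zz z w -> Zz z (evz w p).
Proof.
move=> hw; rewrite /evz horner_coef; apply: Zz_sum => i.
by rewrite coef_map /=; apply: Zz_M; [exact: Zz_int | exact: Zz_X].
Qed.

Lemma conj_evz z p : (evz z p)^* = evz (z^*) p.
Proof.
rewrite /evz -horner_map /=; congr (_.[_]).
rewrite -map_poly_comp; apply: eq_map_poly => a /=; exact: rmorph_int.
Qed.

Lemma geo (u : algC) o : 1 - u ^+ o = (1 - u) * \sum_(i < o) u ^+ i.
Proof.
have := subrXX 1 u o; rewrite expr1n => ->; congr (_ * _).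
by apply: eq_bigr => i _; rewrite expr1n mul1r.
Qed.

Lemma Zz_geo z o : Zz z (\sum_(i < o) z ^+ i).
Proof. by apply: Zz_sum => i; apply: Zz_X; apply: Zz_z. Qed.
Lemma norm_z (z : algC) N : (0 < N)%N -> z ^+ N = -1 -> `|z| = 1.
Proof.
move=> N0 zN; apply/eqP; rewrite -(pexpr_eq1 N0) ?normr_ge0 //.
by rewrite -normrX zN normrN1.
Qed.

Lemma zconj (z : algC) N : (0 < N)%N -> z ^+ N = -1 -> z * z^* = 1.
Proof. by move=> N0 zN; rewrite -normCK (norm_z N0 zN) expr1n. Qed.

Lemma zconjE (z : algC) N : (0 < N)%N -> z ^+ N = -1 -> z^* = - z ^+ N.-1.
Proof.
move=> N0 zN; have h := zconj N0 zN.
have e : z ^+ N = z * z ^+ N.-1 by rewrite -exprS prednK.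
by rewrite -[z^*]mulr1 -[1]opprK -zN e mulrN mulrA (mulrC (z^*) z) h mul1r.
Qed.

Lemma Zz_conj (z x : algC) N : (0 < N)%N -> z ^+ N = -1 -> Zz z x -> Zz z x^*.
Proof.
move=> N0 zN [p ->]; rewrite conj_evz; apply: Zz_ev.
rewrite (zconjE N0 zN); apply: Zz_N; apply: Zz_X; exact: Zz_z.
Qed.

Lemma par_decomp (z x : algC) : Zz z x ->
  exists a : int, exists y, Zz z y /\ x = a%:~R + (1 - z) * y.
Proof.
move=> [p ->]; elim/poly_ind: p => [|p c [a [y [hy e]]]].
  by exists 0, 0; split; [exact: Zz_0 | rewrite /evz rmorph0 horner0 mulr0 addr0].
exists (a + c), (y * z - a%:~R); split.
  by apply: Zz_B; [apply: Zz_M => //; exact: Zz_z | exact: Zz_int].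
rewrite evzD evzM evzX evzC e rmorphD /=; ring.
Qed.

Lemma PL m z : (2 ^ m.+1).-primitive_root z -> z ^+ (2 ^ m) = -1 ->
  forall (a : int) y, Zz z y -> a%:~R = (1 - z) * y -> (2 %| a)%Z.
Proof.
move=> prim zN a y [q ->] e.
have [r Dr] : exists r, a%:P - (1 - 'X) * q = r * ('X^(2 ^ m) + 1).
  apply: (ML prim zN).
  by rewrite evzB evzM evzB evzC evzX /evz rmorph1 hornerC e subrr.
have := congr1 (fun p => p.[1]) Dr.
rewrite /= hornerD hornerN hornerC hornerM hornerD hornerN hornerX hornerC.
rewrite subrr mul0r subr0 hornerM hornerD hornerXn hornerC expr1n => ->.
by apply: dvdz_mull.
Qed.

Definition pidiv (z x : algC) := exists y, Zz z y /\ x = (1 - z) * y.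

Lemma two_pi (z : algC) N : z ^+ N = -1 -> 2 = (1 - z) * \sum_(i < N) z ^+ i.
Proof. by move=> zN; rewrite -geo zN opprK. Qed.

Lemma pidiv_iff m z : (2 ^ m.+1).-primitive_root z -> z ^+ (2 ^ m) = -1 ->
  forall (a : int) y, Zz z y -> pidiv z (a%:~R + (1 - z) * y) <-> (2 %| a)%Z.
Proof.
move=> prim zN a y hy; split.
  move=> [y' [hy' e]]; apply: (PL prim zN (y := y' - y)); first exact: Zz_B.
  by rewrite mulrBr -e addrK.
move=> /dvdzP [b ->]; exists (b%:~R * \sum_(i < 2 ^ m) z ^+ i + y); split.
  by apply: Zz_D => //; apply: Zz_M; [exact: Zz_int | exact: Zz_geo].
have e := two_pi zN.
rewrite intrM (_ : 2%:~R = 2) // e; ring.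
Qed.

Lemma pi_prime m z : (2 ^ m.+1).-primitive_root z -> z ^+ (2 ^ m) = -1 ->
  forall x y, Zz z x -> Zz z y -> pidiv z (x * y) -> pidiv z x \/ pidiv z y.
Proof.
move=> prim zN x y hx hy.
have [a [x' [hx' ->]]] := par_decomp hx.
have [b [y' [hy' ->]]] := par_decomp hy.
have -> : (a%:~R + (1 - z) * x') * (b%:~R + (1 - z) * y') =
   (a * b)%:~R + (1 - z) * (a%:~R * y' + b%:~R * x' + (1 - z) * x' * y').
  by rewrite intrM; ring.
have hz : Zz z (a%:~R * y' + b%:~R * x' + (1 - z) * x' * y').
  apply: Zz_D; first (apply: Zz_D; apply: Zz_M => //; exact: Zz_int).
  apply: Zz_M => //; apply: Zz_M => //; apply: Zz_B; [exact: Zz_1 | exact: Zz_z].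
move=> /(pidiv_iff prim zN (a * b) hz).
rewrite !dvdzE abszM !dvdn2 oddM negb_and => /orP[h|h]; [left|right].
  by apply/(pidiv_iff prim zN a hx'); rewrite dvdzE dvdn2.
by apply/(pidiv_iff prim zN b hy'); rewrite dvdzE dvdn2.
Qed.
Lemma pi_neq0 (z : algC) N : z ^+ N = -1 -> 1 - z != 0.
Proof.
move=> zN; rewrite subr_eq0; apply/eqP => z1; move: zN; rewrite -z1 expr1n.
move/eqP; rewrite -subr_eq0 opprK (_ : 1 + 1 = 2%:R) // pnatr_eq0 //.
Qed.

Lemma pidiv_conj (z x : algC) N : (0 < N)%N -> z ^+ N = -1 -> pidiv z x -> pidiv z x^*.
Proof.
move=> N0 zN [y [hy ->]]; exists (- z^* * y^*); split.
  apply: Zz_M; first apply: Zz_N; apply: (Zz_conj N0 zN) => //; exact: Zz_z.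
have h := zconj N0 zN.
rewrite rmorphM rmorphB rmorph1 /= mulrA; congr (_ * _).
by rewrite mulrBl mul1r mulrN opprK h; ring.
Qed.

Lemma val_lemma m z : (2 ^ m.+1).-primitive_root z -> z ^+ (2 ^ m) = -1 ->
  forall j x, Zz z x -> (exists w, Zz z w /\ x * x^* = (1 - z) ^+ (j.*2) * w) ->
  exists y, Zz z y /\ x = (1 - z) ^+ j * y.
Proof.
move=> prim zN; have N0 : (0 < 2 ^ m)%N by rewrite expn_gt0.
have hzz := zconj N0 zN.
have hZpi : Zz z (1 - z) by apply: Zz_B; [exact: Zz_1 | exact: Zz_z].
have hZzc : Zz z z^* by apply: (Zz_conj N0 zN); exact: Zz_z.
elim=> [|j IH] x hx.
  by move=> _; exists x; split => //; rewrite expr0 mul1r.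
move=> [w [hw e]].
have [y [hy Dx]] : exists y, Zz z y /\ x = (1 - z) ^+ j * y.
  apply: IH => //; exists ((1 - z) ^+ 2 * w); split; first by apply: Zz_M => //; apply: Zz_X.
  by rewrite e doubleS -addn2 exprD mulrA.
have pic : (1 - z)^* = (1 - z) * (- z^*).
  by rewrite rmorphB rmorph1 /= mulrBl mul1r mulrN opprK hzz; ring.
have e2 : (1 - z) ^+ (j.*2) * (y * y^* * (- z^*) ^+ j) = (1 - z) ^+ (j.*2) * ((1 - z) ^+ 2 * w).
  rewrite [RHS]mulrA -exprD addn2 -doubleS -e Dx rmorphM rmorphXn /= pic exprMn -addnn exprD; ring.
have e3 := mulfI (expf_neq0 _ (pi_neq0 zN)) e2.
have e4 : y * y^* = (1 - z) * ((1 - z) * w * (- z) ^+ j).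
  have : y * y^* * (- z^*) ^+ j * (- z) ^+ j = (1 - z) ^+ 2 * w * (- z) ^+ j by rewrite e3.
  rewrite -mulrA -exprMn mulrN mulNr opprK (mulrC _ z) hzz expr1n mulr1 => ->.
  by rewrite expr2 !mulrA.
have hd : pidiv z (y * y^*).
  exists ((1 - z) * w * (- z) ^+ j); split => //.
  by apply: Zz_M; [apply: Zz_M | apply: Zz_X; apply: Zz_N; exact: Zz_z].
have hyc : Zz z y^* by apply: (Zz_conj N0 zN).
have [[y' [hy' Dy]] | hc] := pi_prime prim zN hy hyc hd.
  by exists y'; split => //; rewrite Dx Dy exprS mulrA (mulrC _ (1 - z)).
have [y' [hy' Dy]] := pidiv_conj N0 zN hc.
by exists y'; split => //; rewrite Dx -(conjCK y) Dy exprS mulrA (mulrC _ (1 - z)).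
Qed.

Lemma Aj m (z : algC) : z ^+ (2 ^ m) = -1 ->
  forall j, (j <= m)%N -> exists w, Zz z w /\ 1 - z ^+ (2 ^ j) = (1 - z) ^+ (2 ^ j) * w.
Proof.
move=> zN; elim=> [|j IH] hj.
  by exists 1; split; [exact: Zz_1 | rewrite !expr1 mulr1].
have [w [hw e]] := IH (ltnW hj).
set u := z ^+ (2 ^ j).
have e1 : 1 + u = 1 - u ^+ (1 + 2 ^ (m - j)).
  rewrite /u -exprM mulnDr muln1 -expnD subnKC ?(ltnW hj) // exprD zN; ring.
exists (w * w * \sum_(i < 1 + 2 ^ (m - j)) u ^+ i); split.
  by apply: Zz_M; [apply: Zz_M | apply: Zz_sum => i; apply: Zz_X; apply: Zz_X; exact: Zz_z].
have -> : z ^+ (2 ^ j.+1) = u ^+ 2 by rewrite /u -exprM expnS mulnC.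
have -> : 1 - u ^+ 2 = (1 - u) * (1 + u) by ring.
by rewrite e1 geo e expnS mulnC exprM; ring.
Qed.

Lemma sqlem (z : algC) : forall j, exists w, Zz z w /\
  (1 - z) ^+ (2 ^ j) = (1 - z ^+ (2 ^ j)) + 2 * w.
Proof.
elim=> [|j [w [hw e]]].
  by exists 0; split; [exact: Zz_0 | rewrite !expr1 mulr0 addr0].
set u := z ^+ (2 ^ j) in e.
exists (u ^+ 2 - u + 2 * w * (1 - u) + 2 * w ^+ 2); split.
  have hu : Zz z u by apply: Zz_X; exact: Zz_z.
  apply: Zz_D; last by apply: Zz_M; [exact: Zz_2 | apply: Zz_X].
  apply: Zz_D; first by apply: Zz_B => //; apply: Zz_X.
  apply: Zz_M; first by apply: Zz_M => //; exact: Zz_2.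
  by apply: Zz_B => //; exact: Zz_1.
rewrite expnS mulnC exprM e -exprM mulnC -expnS -/u.
have -> : z ^+ (2 ^ j.+1) = u ^+ 2 by rewrite /u -exprM expnS mulnC.
ring.
Qed.
Lemma ringmod (i a b c : algC) : i ^+ 2 = -1 -> a - b = (i ^+ 2 + 1) * c -> a = b.
Proof. by move=> i2 e; apply/eqP; rewrite -subr_eq0 e i2 addNr mul0r. Qed.

Lemma step_lemma m z : (2 ^ m.+1).-primitive_root z -> z ^+ (2 ^ m) = -1 -> (0 < m)%N ->
  forall n x, Zz z x -> x * x^* = 2 ^+ n.+1 ->
  exists y, Zz z y /\ x = (1 + z ^+ (2 ^ m.-1)) * y /\ y * y^* = 2 ^+ n.
Proof.
move=> prim zN m0 n x hx exx.
set h := (2 ^ m.-1)%N.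
have hh : (h.*2 = 2 ^ m)%N by rewrite /h -mul2n -expnS prednK.
set i := z ^+ h.
have hi : Zz z i by apply: Zz_X; exact: Zz_z.
have i2 : i ^+ 2 = -1 by rewrite /i -exprM muln2 hh.
have [w2 [hw2 e2]] := Aj zN (leqnn m).
rewrite zN opprK in e2.
have [y0 [hy0 Dx]] : exists y0, Zz z y0 /\ x = (1 - z) ^+ h * y0.
  apply: (val_lemma prim zN) => //; exists (w2 * 2 ^+ n); split.
    by apply: Zz_M => //; apply: Zz_X; exact: Zz_2.
  by rewrite exx exprS {1}(_ : 2 = 1 + 1) // e2 hh mulrA; congr (_ * _).
have [w [hw e]] := sqlem z m.-1.
rewrite -/h -/i in e.
pose v := - i + (1 - i) * w.
have ev : (1 - z) ^+ h = (1 + i) * v.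
  rewrite e /v; apply/eqP; rewrite -subr_eq0.
  have -> : 1 - i + 2 * w - (1 + i) * (- i + (1 - i) * w) = (i ^+ 2 + 1) * (1 + w) by ring.
  by rewrite i2 addNr mul0r.
have hv : Zz z v.
  apply: Zz_D; first by apply: Zz_N.
  by apply: Zz_M => //; apply: Zz_B => //; exact: Zz_1.
exists (v * y0); split; first by apply: Zz_M.
split; first by rewrite Dx ev mulrA.
have N0 : (0 < 2)%N by [].
have ic : i^* = - i.
  by rewrite (zconjE N0 i2) expr1.
apply: (@mulfI _ 2); first by rewrite pnatr_eq0.
have c1 : (1 + i)^* = 1 - i by rewrite rmorphD /= conjC1 ic.
have c2 : ((1 + i) * v * y0)^* = (1 + i)^* * (v * y0)^* by rewrite -mulrA rmorphM.
rewrite -exprS -exx Dx ev c2 c1.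
have -> : (2 : algC) = - (i ^+ 2) + 1 by rewrite i2 opprK.
ring.
Qed.
From mathcomp Require Import zify.

Lemma Zz_red m z : z ^+ (2 ^ m) = -1 -> forall x, Zz z x ->
  exists p : {poly int}, (size p <= 2 ^ m)%N /\ x = evz z p.
Proof.
move=> zN x [p0 ->].
have N0 : (0 < 2 ^ m)%N by rewrite expn_gt0.
have mon := Xn1_monic N0.
have Dp := Pdiv.RingMonic.rdivp_eq mon p0.
exists (Pdiv.CommonRing.rmodp p0 ('X^(2 ^ m) + 1)); split.
  have := Pdiv.CommonRing.ltn_rmodp p0 ('X^(2 ^ m) + 1).
  by rewrite -[1]/(1%:P) size_XnaddC // monic_neq0.
rewrite {1}Dp evzD evzM evzD evzXn zN /evz rmorph1 hornerC addNr mulr0 add0r //.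
Qed.

Lemma sumsq1 n (c : 'I_n -> int) : \sum_i c i ^+ 2 = 1 ->
  exists t, c t ^+ 2 = 1 /\ forall i, i != t -> c i = 0.
Proof.
move=> hs.
case: (pickP (fun i => c i != 0)) => [t ht | h0]; last first.
  move: hs; rewrite big1 // => i _; move: (h0 i) => /= /negbFE /eqP ->.
  by rewrite expr0n.
rewrite (bigD1 t) //= in hs.
have ge0 : 0 <= \sum_(i | i != t) c i ^+ 2 by apply: sumr_ge0 => i _; exact: sqr_ge0.
have ct1 : 1 <= c t ^+ 2.
  move: ht; rewrite expr2; move: (c t) => a /eqP ha.
  have [h|h] : (0 < a) \/ (a < 0) by lia.
    by nia.
  by nia.
have [hct hr] : c t ^+ 2 = 1 /\ \sum_(i | i != t) c i ^+ 2 = 0.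
  by move: hs ge0 ct1; move: (c t ^+ 2) (\sum_(i | i != t) c i ^+ 2) => A B; lia.
exists t; split => // i hi.
have := psumr_eq0P (fun i _ => sqr_ge0 (c i)) hr hi.
by move/eqP; rewrite sqrf_eq0 => /eqP.
Qed.

Lemma zconjX (z : algC) N i : (0 < N)%N -> z ^+ N = -1 -> (i <= N)%N ->
  z^* ^+ i = - z ^+ (N - i).
Proof.
move=> N0 zN hi; have h := zconj N0 zN.
have e : z ^+ N = z ^+ i * z ^+ (N - i) by rewrite -exprD subnKC.
rewrite -[z^* ^+ i]mulr1 -[1]opprK -zN e mulrN mulrA -exprMn.
by rewrite (mulrC (z^*) z) h expr1n mul1r.
Qed.
Lemma szhelp s N : (0 < N)%N -> ((s + N.+1).-1 <= (N + N).-1)%N -> (s <= N)%N.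
Proof. move=> h; lia. Qed.

Lemma evz_sum z (p : {poly int}) N : (size p <= N)%N ->
  evz z p = \sum_(i < N) (p`_i)%:~R * z ^+ i.
Proof.
move=> sp; rewrite /evz (@horner_coef_wide _ N).
  by apply: eq_bigr => i _; rewrite coef_map.
by rewrite size_map_inj_poly //; exact: intr_inj.
Qed.

Lemma base m z : (2 ^ m.+1).-primitive_root z -> z ^+ (2 ^ m) = -1 ->
  forall x, Zz z x -> x * x^* = 1 -> exists j, x = z ^+ j.
Proof.
move=> prim zN x hx exx.
have N0 : (0 < 2 ^ m)%N by rewrite expn_gt0.
move: (2 ^ m)%N N0 zN (ML prim zN) (Zz_red zN hx) => N N0 zN' MLN [p [sp Dx]].
pose c i := p`_i.
pose pt := \poly_(i < N) (if i == 0%N then c 0%N else - c (N - i)%N).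
have spt : (size pt <= N)%N by apply: size_poly.
pose sg (i : 'I_N) := Ordinal (ltn_pmod (N - i) N0).
have sgK : involutive sg.
  move=> i; apply: val_inj => /=.
  have [i0|ip] := posnP i; first by rewrite i0 subn0 modnn subn0 modnn.
  rewrite (@modn_small (N - i)) ?subKn ?modn_small //; [exact: ltnW | lia].
have ept : evz z pt = x^*.
  rewrite Dx conj_evz (evz_sum z spt) (evz_sum _ sp).
  rewrite (reindex_inj (inv_inj sgK)); apply: eq_bigr => i _ /=.
  have iN := ltn_ord i.
  have [i0|ip] := posnP i.
    by rewrite i0 subn0 modnn coef_poly N0 /= !expr0.
  rewrite modn_small; last by lia.
  rewrite coef_poly (_ : (N - i < N)%N); last by lia.
  rewrite (_ : (N - i == 0)%N = false); last by apply/eqP; lia.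
  rewrite subKn; last exact: ltnW.
  by rewrite (zconjX N0 zN' (ltnW iN)) rmorphN /= mulrN mulNr.
pose q := p * pt - 1.
have eq0 : evz z q = 0.
  by rewrite evzB evzM ept -Dx exx /evz rmorph1 hornerC subrr.
have [r Dq] := MLN q eq0.
have sq : (size q <= (N + N).-1)%N.
  rewrite /q; apply: (leq_trans (size_add _ _)); rewrite size_opp size_poly1.
  rewrite geq_max; apply/andP; split; last by lia.
  apply: (leq_trans (size_mul_leq _ _)); move: sp spt; lia.
have rN : r`_N = 0.
  have [->|rnz] := eqVneq r 0; first by rewrite coef0.
  apply: nth_default; move: sq; rewrite Dq size_mul //; last first.
    by rewrite -size_poly_eq0 -[1]/(1%:P) size_XnaddC.
  rewrite -[1]/(1%:P) size_XnaddC //; exact: szhelp.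
have qN : q`_N = q`_0.
  rewrite Dq mulrDr mulr1 !coefD !coefMXn ltnn subnn rN addr0 N0 add0r //.
have q0 : q`_0 = c 0%N * c 0%N - 1.
  rewrite /q coefB coef1 coefM big_ord1 /= coef_poly N0 //.
have qNe : q`_N = c 0%N ^+ 2 - \sum_(j < N.+1) c j ^+ 2.
  rewrite /q coefB coef1 (_ : (N == 0)%N = false) ?subr0; last by apply/eqP; lia.
  rewrite coefM !big_ord_recl /= subn0 coef_poly ltnn mulr0 add0r opprD addrA subrr add0r.
  rewrite -sumrN; apply: eq_bigr => j _ /=.
  rewrite /bump /= add1n coef_poly.
  have [jN|jN] := eqVneq (j.+1) N.
    by rewrite jN subnn /c (nth_default 0 sp) mul0r expr0n oppr0.
  have ji : (j.+1 < N)%N by move: (ltn_ord j) jN; lia.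
  rewrite (_ : (N - j.+1 < N)%N); last by lia.
  rewrite (_ : (N - j.+1 == 0)%N = false); last by apply/eqP; lia.
  by rewrite subKn ?(ltnW ji) // mulrN expr2.
have hs : \sum_(j < N.+1) c j ^+ 2 = 1.
  move: qN; rewrite qNe q0 expr2; move=> h.
  exact: oppr_inj (addrI _ h).
have [t [ht h0]] := @sumsq1 _ (fun j : 'I_N.+1 => c j) hs.
have Dx' : x = (c t)%:~R * z ^+ t.
  rewrite Dx (evz_sum z (leq_trans sp (leqnSn N))) (bigD1 t) //= big1 ?addr0 //.
  by move=> i hi; rewrite -/(c i) (h0 i hi) mul0r.
move/eqP: ht; rewrite sqrf_eq1 => /orP[]/eqP ct.
  by exists t; rewrite Dx' ct mul1r.
by exists (t + N)%N; rewrite Dx' ct exprD zN' mulrN1 mulN1r.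
Qed.
Lemma Dlem m z : (2 ^ m.+1).-primitive_root z -> z ^+ (2 ^ m) = -1 -> (0 < m)%N ->
  forall n x, Zz z x -> x * x^* = 2 ^+ n ->
  exists j, x = z ^+ j * (1 + z ^+ (2 ^ m.-1)) ^+ n.
Proof.
move=> prim zN m0; elim=> [|n IH] x hx exx.
  have [j ->] := base prim zN hx exx.
  by exists j; rewrite expr0 mulr1.
have [y [hy [-> eyy]]] := step_lemma prim zN m0 hx exx.
have [j ->] := IH y hy eyy.
by exists j; rewrite exprS; ring.
Qed.

Lemma zetaN m : zeta m.+1 ^+ (2 ^ m) = -1.
Proof. by rewrite /zeta /= rootCK // expn_gt0. Qed.

Lemma zeta_prim m : (2 ^ m.+1).-primitive_root (zeta m.+1).
Proof.
have zN := zetaN m.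
have z1 : zeta m.+1 ^+ (2 ^ m.+1) = 1 by rewrite expnS mulnC exprM zN sqrrN expr1n.
have [d pd dd] := prim_order_exists (expn_gt0 2 m.+1) z1.
move/(@dvdn_pfactor 2 d m.+1 isT): dd => [e le De].
have [em|em] := eqVneq e m.+1; first by rewrite De em in pd.
have : (d %| 2 ^ m)%N by rewrite De dvdn_exp2l //; move: le em; lia.
rewrite (prim_order_dvd pd) zN eq_sym -subr_eq0 opprK (_ : 1 + 1 = 2%:R) //.
by rewrite pnatr_eq0.
Qed.
Lemma modh (i h : nat) : (i < h + h)%N -> (i %% h)%N = if (h <= i)%N then (i - h)%N else i.
Proof.
move=> ih; case: leqP => hi.
  rewrite -{1}(subnK hi) modnDr modn_small //; lia.
by rewrite modn_small.
Qed.

Lemma sum_split (R : nmodType) h (F : nat -> R) :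
  \sum_(t < h + h) F t = \sum_(t < h) F t + \sum_(t < h) F (t + h)%N.
Proof.
rewrite -!(big_mkord xpredT) (big_cat_nat _ (leq_addr h h)) //=; congr (_ + _).
by rewrite -{1}(add0n h) big_addn addnK big_mkord.
Qed.

Lemma exp2S m : (2 ^ m.+1 = 2 ^ m + 2 ^ m)%N.
Proof. by rewrite expnS mul2n addnn. Qed.

Lemma sylv_sym m r c : sylv m r c = sylv m c r.
Proof. by elim: m r c => [//|m IH] r c /=; rewrite andbC IH. Qed.

Lemma sylv_lo m r c : (c < 2 ^ m)%N -> sylv m.+1 r c = sylv m (r %% 2 ^ m)%N c.
Proof.
by move=> hc /=; rewrite (leqNgt _ c) hc andbF mul1r (modn_small hc).
Qed.

Lemma sylv_hi m r c : (c < 2 ^ m)%N ->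
  sylv m.+1 r (c + 2 ^ m) = (if (2 ^ m <= r)%N then -1 else 1) * sylv m (r %% 2 ^ m)%N c.
Proof.
move=> hc /=; rewrite leq_addl andbT modnDr (modn_small hc) //.
Qed.

Lemma sylv_sq m r c : sylv m r c ^+ 2 = 1.
Proof.
elim: m r c => [|m IH] r c /=; first by rewrite expr1n.
by rewrite exprMn IH mulr1; case: ifP => _; rewrite ?sqrrN expr1n.
Qed.

Lemma sylv_orth m i j : (i < 2 ^ m)%N -> (j < 2 ^ m)%N ->
  \sum_(t < 2 ^ m) sylv m i t * sylv m j t = (2 ^ m)%:R * (i == j)%:R.
Proof.
elim: m i j => [|m IH] i j.
  rewrite expn0 !ltnS !leqn0 => /eqP -> /eqP ->.
  by rewrite big_ord1 /= mulr1.
move=> hi hj; set h := (2 ^ m)%N.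
have h0 : (0 < h)%N by rewrite expn_gt0.
rewrite exp2S (sum_split (2 ^ m) (fun t => sylv m.+1 i t * sylv m.+1 j t)).
have e1 : \sum_(t < h) sylv m.+1 i t * sylv m.+1 j t = h%:R * (i %% h == j %% h)%N%:R.
  rewrite -IH ?ltn_pmod //; apply: eq_bigr => t _.
  by rewrite !sylv_lo.
have e2 : \sum_(t < h) sylv m.+1 i (t + h) * sylv m.+1 j (t + h) =
    (if (h <= i)%N then -1 else 1) * (if (h <= j)%N then -1 else 1) *
    (h%:R * (i %% h == j %% h)%N%:R).
  rewrite -IH ?ltn_pmod // mulr_sumr; apply: eq_bigr => t _.
  by rewrite !sylv_hi //; ring.
rewrite e1 e2; move: hi hj; rewrite exp2S => hi hj.
rewrite !modh //.
case: (leqP h i) => hhi; case: (leqP h j) => hhj.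
- have -> : (i - h == j - h)%N = (i == j) by apply/eqP/eqP; lia.
  rewrite natrD; case: (i == j); rewrite /=; ring.
- have -> : (i == j)%N = false by apply/eqP; lia.
  rewrite /=; ring.
- have -> : (i == j)%N = false by apply/eqP; lia.
  rewrite /=; ring.
- rewrite natrD; case: (i == j); rewrite /=; ring.
Qed.
Lemma bits_mod m a j : (j < m)%N -> odd ((a %% 2 ^ m) %/ 2 ^ j)%N = odd (a %/ 2 ^ j)%N.
Proof.
move=> jm.
have e : (2 ^ m = 2 ^ (m - j) * 2 ^ j)%N by rewrite -expnD subnK // ltnW.
have ea : a = (a %/ 2 ^ m * 2 ^ (m - j) * 2 ^ j + a %% 2 ^ m)%N by rewrite -mulnA -e -divn_eq.
rewrite [in RHS]ea divnMDl ?expn_gt0 // oddD oddM oddX.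
by rewrite subn_eq0 leqNgt jm /= andbF.
Qed.

Lemma odd_div_top m r : (r < 2 ^ m.+1)%N -> odd (r %/ 2 ^ m)%N = (2 ^ m <= r)%N.
Proof.
move=> hr; case: leqP => h; last by rewrite divn_small.
have er : r = (1 * 2 ^ m + (r - 2 ^ m))%N by rewrite mul1n addnC subnK.
rewrite {1}er divnMDl ?expn_gt0 // divn_small //.
by move: hr; rewrite exp2S; lia.
Qed.

Lemma sylv_bits m r c : (r < 2 ^ m)%N -> (c < 2 ^ m)%N ->
  sylv m r c = (-1) ^+ (\big[addb/false]_(j < m) (odd (r %/ 2 ^ j)%N && odd (c %/ 2 ^ j)%N)).
Proof.
elim: m r c => [|m IH] r c hr hc; first by rewrite big_ord0.
rewrite /= -/(sylv m _ _) IH ?ltn_pmod ?expn_gt0 // big_ord_recr /= signr_addb mulrC.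
congr (_ * _).
  congr ((-1) ^+ (nat_of_bool _)); apply: eq_bigr => j _ /=.
  by rewrite !bits_mod.
by rewrite !odd_div_top //; case: (_ && _).
Qed.

Lemma part_sum (R : nmodType) (T : finType) N (g : T -> nat) (hg : forall x, (g x < N)%N)
  (F : T -> R) : \sum_x F x = \sum_(t < N) \sum_(x | g x == t) F x.
Proof.
rewrite (partition_big (fun x => Ordinal (hg x)) xpredT) //=.
Qed.

Definition flo n k (f : Vn n -> 'I_(2 ^ k)) x : nat := (f x %% 2 ^ k.-1)%N.

Definition cc n k (f : Vn n -> 'I_(2 ^ k)) u t : int :=
  \sum_(x | flo f x == t) (-1) ^+ (Defs.comp f k.-1 x (+) dotv u x).

Lemma flo_lt n m (f : Vn n -> 'I_(2 ^ m.+1)) x : (flo f x < 2 ^ m)%N.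
Proof. by rewrite /flo ltn_pmod // expn_gt0. Qed.

Lemma walsh_dec n m (f : Vn n -> 'I_(2 ^ m.+1)) u i : (i < 2 ^ m)%N ->
  walsh (gi f i) u = \sum_(t < 2 ^ m) sylv m i t * cc f u t.
Proof.
move=> hi.
rewrite /walsh (part_sum (@flo_lt n m f)); apply: eq_bigr => t _.
rewrite /cc mulr_sumr; apply: eq_big => // x /eqP ht.
rewrite /gi /= addbAC signr_addb mulrC; congr (_ * _).
rewrite -ht sylv_bits ?flo_lt //; congr ((-1) ^+ (nat_of_bool _)).
apply: eq_bigr => j _; congr (_ && _).
by rewrite /flo bits_mod.
Qed.

Lemma gwalsh_dec n m (f : Vn n -> 'I_(2 ^ m.+1)) u :
  gwalsh f u = \sum_(t < 2 ^ m) (cc f u t)%:~R * zeta m.+1 ^+ t.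
Proof.
rewrite /gwalsh (part_sum (@flo_lt n m f)); apply: eq_bigr => t _.
rewrite /cc rmorph_sum /= mulr_suml; apply: eq_big => // x /eqP ht.
rewrite rmorph_sign mulrC -ht /flo /=.
rewrite {1}(divn_eq (f x) (2 ^ m)) exprD mulnC exprM zetaN.
rewrite /Defs.comp signr_addb signr_odd; ring.
Qed.
Lemma coef_uniq m (a b : nat -> int) :
  \sum_(t < 2 ^ m) (a t)%:~R * zeta m.+1 ^+ t = \sum_(t < 2 ^ m) (b t)%:~R * zeta m.+1 ^+ t ->
  forall t, (t < 2 ^ m)%N -> a t = b t.
Proof.
move=> e t ht.
pose p := \poly_(t < 2 ^ m) (a t - b t).
have p0 : p = 0.
  apply: (lin_indep (zeta_prim m)); first exact: size_poly.
  rewrite (evz_sum _ (size_poly _ _)).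
  under eq_bigr => i _ do rewrite coef_poly ltn_ord rmorphB mulrBl.
  by rewrite sumrB e subrr.
have := congr1 (fun q : {poly int} => q`_t) p0.
rewrite coef_poly ht coef0 => /eqP; rewrite subr_eq0 => /eqP.
done.
Qed.

Lemma sum_single N r (c : int) (F : nat -> algC) : (r < N)%N ->
  \sum_(t < N) (c * (t == r :> nat)%:R)%:~R * F t = c%:~R * F r.
Proof.
move=> hr; rewrite (bigD1 (Ordinal hr)) //= eqxx mulr1 big1 ?addr0 // => i hi.
rewrite (_ : (i == r :> nat) = false) ?mulr0 ?mul0r //.
by apply: contraNF hi => /eqP hir; apply/eqP/val_inj.
Qed.

Lemma Zz_sumX m (a : nat -> int) : Zz (zeta m.+1) (\sum_(t < 2 ^ m) (a t)%:~R * zeta m.+1 ^+ t).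
Proof. by apply: Zz_sum => t; apply: Zz_M; [exact: Zz_int | apply: Zz_X; exact: Zz_z]. Qed.

Lemma normsq (X : algC) n : `|X| = sqrtC (2 ^+ n) -> X * X^* = 2 ^+ n.
Proof. by rewrite -normCK => ->; rewrite sqrtCK. Qed.

Lemma zeta_exp m e : zeta m.+1 ^+ e = (-1) ^+ (e %/ 2 ^ m)%N * zeta m.+1 ^+ (e %% 2 ^ m)%N.
Proof. by rewrite {1}(divn_eq e (2 ^ m)) exprD mulnC exprM zetaN. Qed.

Lemma iota2 m : (0 < m)%N -> (zeta m.+1 ^+ (2 ^ m.-1)) ^+ 2 = -1.
Proof. by move=> m0; rewrite -exprM muln2 -mul2n -expnS prednK // zetaN. Qed.

Lemma sq1i (i : algC) : i ^+ 2 = -1 -> (1 + i) ^+ 2 = 2 * i.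
Proof. by move=> i2; apply: (ringmod (c := 1) i2); ring. Qed.

Lemma fwd_even m n (a : nat -> int) : (0 < m)%N -> ~~ odd n ->
  `|\sum_(t < 2 ^ m) (a t)%:~R * zeta m.+1 ^+ t| = sqrtC (2 ^+ n) ->
  exists r s, (r < 2 ^ m)%N /\
    forall t, (t < 2 ^ m)%N -> a t = (-1) ^+ s * 2 ^+ (n %/ 2)%N * (t == r)%:R.
Proof.
move=> m0 ne hX.
have [j Dj] := Dlem (zeta_prim m) (zetaN m) m0 (Zz_sumX m a) (normsq hX).
have i2 := iota2 m0.
move: Dj; set z := zeta m.+1; set i := z ^+ (2 ^ m.-1) => Dj.
have ni : n = (n %/ 2 * 2)%N by rewrite divnK // dvdn2.
set l := (n %/ 2)%N.
set e := (j + 2 ^ m.-1 * l)%N.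
exists (e %% 2 ^ m)%N, (e %/ 2 ^ m)%N; split; first by rewrite ltn_pmod // expn_gt0.
apply: coef_uniq; rewrite Dj sum_single ?ltn_pmod ?expn_gt0 //.
rewrite {1}ni mulnC exprM sq1i // exprMn /i -exprM mulrCA -exprD -/e /z.
rewrite (zeta_exp m e) !rmorphM /= !rmorphXn /= rmorphN1 (_ : 2%:~R = 2) //; ring.
Qed.
Lemma sum_two N r1 r2 (c1 c2 : int) (F : nat -> algC) : (r1 < N)%N -> (r2 < N)%N ->
  \sum_(t < N) (c1 * (t == r1 :> nat)%:R + c2 * (t == r2 :> nat)%:R)%:~R * F t =
  c1%:~R * F r1 + c2%:~R * F r2.
Proof.
move=> h1 h2.
under eq_bigr => t _ do rewrite rmorphD mulrDl.
by rewrite big_split /= !sum_single.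
Qed.

Lemma fwd_odd m n (a : nat -> int) : (0 < m)%N -> odd n ->
  `|\sum_(t < 2 ^ m) (a t)%:~R * zeta m.+1 ^+ t| = sqrtC (2 ^+ n) ->
  exists r s b, (r < 2 ^ m.-1)%N /\
    forall t, (t < 2 ^ m.-1)%N ->
      a t = (-1) ^+ s * 2 ^+ (n %/ 2)%N * (t == r)%:R /\
      a (t + 2 ^ m.-1)%N = (-1) ^+ (s + b)%N * 2 ^+ (n %/ 2)%N * (t == r)%:R.
Proof.
move=> m0 no hX.
have [j Dj] := Dlem (zeta_prim m) (zetaN m) m0 (Zz_sumX m a) (normsq hX).
have i2 := iota2 m0.
have NN : (2 ^ m = 2 ^ m.-1 + 2 ^ m.-1)%N by rewrite -exp2S prednK.
move: Dj; set z := zeta m.+1; set h := (2 ^ m.-1)%N; set i := z ^+ h => Dj.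
have ni : n = (n %/ 2 * 2 + 1)%N by rewrite {1}(divn_eq n 2) modn2 no.
set l := (n %/ 2)%N.
set e := (j + h * l)%N.
set c : int := (-1) ^+ (e %/ 2 ^ m)%N * 2 ^+ l.
have e1 : (1 + i) ^+ n = 2 ^+ l * z ^+ (h * l) * (1 + i).
  by rewrite {1}ni exprD expr1 mulnC exprM sq1i // exprMn /i -exprM.
have ze : z ^+ e = (-1) ^+ (e %/ 2 ^ m)%N * z ^+ (e %% 2 ^ m)%N by rewrite /z zeta_exp.
have cE : c%:~R = (-1) ^+ (e %/ 2 ^ m)%N * 2 ^+ l :> algC.
  by rewrite /c rmorphM rmorph_sign rmorphXn.
have DX : \sum_(t < 2 ^ m) (a t)%:~R * z ^+ t =
    c%:~R * z ^+ (e %% 2 ^ m)%N + c%:~R * z ^+ ((e %% 2 ^ m) + h)%N.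
  rewrite Dj e1 (_ : z ^+ j * (2 ^+ l * z ^+ (h * l) * (1 + i)) = 2 ^+ l * z ^+ e * (1 + i)).
    by rewrite ze exprD cE /i; ring.
  by rewrite /e exprD; ring.
have r0N : (e %% 2 ^ m < 2 ^ m)%N by rewrite ltn_pmod // expn_gt0.
have h0 : (0 < h)%N by rewrite expn_gt0.
case: (ltnP (e %% 2 ^ m)%N h) => hr.
  have hr2 : ((e %% 2 ^ m) + h < 2 ^ m)%N by rewrite [X in (_ < X)%N]NN ltn_add2r.
  pose b t : int := c * (t == (e %% 2 ^ m)%N)%:R + c * (t == (e %% 2 ^ m) + h)%N%:R.
  have ab := coef_uniq (b := b) (etrans DX (esym (sum_two c c (fun t => z ^+ t) r0N hr2))).
  exists (e %% 2 ^ m)%N, (e %/ 2 ^ m)%N, 0%N; split => // t ht.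
  have htN : (t < 2 ^ m)%N by rewrite NN ltn_addr.
  have htN' : (t + h < 2 ^ m)%N by rewrite NN ltn_add2r.
  rewrite !ab // /b addn0 -/c.
  rewrite (_ : (t == e %% 2 ^ m + h)%N = false); last by apply/eqP; lia.
  rewrite (_ : (t + h == e %% 2 ^ m)%N = false); last by apply/eqP; lia.
  by rewrite eqn_add2r /c !mulr0 !addr0 add0r.
set r' := (e %% 2 ^ m - h)%N.
have hr' : (r' < h)%N by rewrite /r'; lia.
have hr1 : (r' < 2 ^ m)%N by rewrite NN ltn_addr.
have hr2 : (r' + h < 2 ^ m)%N by rewrite NN ltn_add2r.
have DX' : \sum_(t < 2 ^ m) (a t)%:~R * z ^+ t =
    c%:~R * z ^+ (r' + h)%N + (- c)%:~R * z ^+ r'.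
  rewrite DX rmorphN /= (_ : (e %% 2 ^ m = r' + h)%N); last by rewrite /r' subnK.
  rewrite -addnA -NN (exprD _ r' (2 ^ m)) /z zetaN; ring.
pose b t : int := c * (t == r' + h)%N%:R + (- c) * (t == r')%:R.
have ab := coef_uniq (b := b) (etrans DX' (esym (sum_two c (- c) (fun t => z ^+ t) hr2 hr1))).
exists r', (e %/ 2 ^ m).+1, 1%N; split => // t ht.
have htN : (t < 2 ^ m)%N by rewrite NN ltn_addr.
have htN' : (t + h < 2 ^ m)%N by rewrite NN ltn_add2r.
rewrite !ab // /b eqn_add2r.
rewrite (_ : (t == r' + h)%N = false); last by apply/eqP; lia.
rewrite (_ : (t + h == r')%N = false); last by apply/eqP; lia.
rewrite /c addn1 !exprS /= !mulr0 ?addr0 ?add0r; split; ring.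
Qed.
Lemma norm_zeta m : `|zeta m.+1| = 1.
Proof. by apply: (norm_z (N := 2 ^ m)); [rewrite expn_gt0 | exact: zetaN]. Qed.

Lemma sqrt2pow l : sqrtC (2 ^+ (l * 2)%N) = 2 ^+ l :> algC.
Proof. by rewrite exprM sqrCK // exprn_ge0. Qed.

Lemma bwd_even m n (a : nat -> int) : ~~ odd n ->
  (exists r s, (r < 2 ^ m)%N /\
    forall t, (t < 2 ^ m)%N -> a t = (-1) ^+ s * 2 ^+ (n %/ 2)%N * (t == r)%:R) ->
  `|\sum_(t < 2 ^ m) (a t)%:~R * zeta m.+1 ^+ t| = sqrtC (2 ^+ n).
Proof.
move=> ne [r [s [hr ha]]].
rewrite (eq_bigr (fun t : 'I_(2 ^ m) =>
   ((-1) ^+ s * 2 ^+ (n %/ 2)%N * (t == r :> nat)%:R)%:~R * zeta m.+1 ^+ t)); last first.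
  by move=> t _; rewrite ha.
rewrite sum_single // -{2}(divnK (_ : (2 %| n)%N)) ?dvdn2 // sqrt2pow.
rewrite normrM normrX norm_zeta expr1n mulr1 rmorphM rmorph_sign rmorphXn /=.
by rewrite normrM normrX normrN1 expr1n mul1r normrX normr_nat.
Qed.

Lemma bwd_odd m n (a : nat -> int) : (0 < m)%N -> odd n ->
  (exists r s b, (r < 2 ^ m.-1)%N /\
    forall t, (t < 2 ^ m.-1)%N ->
      a t = (-1) ^+ s * 2 ^+ (n %/ 2)%N * (t == r)%:R /\
      a (t + 2 ^ m.-1)%N = (-1) ^+ (s + b)%N * 2 ^+ (n %/ 2)%N * (t == r)%:R) ->
  `|\sum_(t < 2 ^ m) (a t)%:~R * zeta m.+1 ^+ t| = sqrtC (2 ^+ n).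
Proof.
move=> m0 no [r [s [b [hr ha]]]].
have NN : (2 ^ m = 2 ^ m.-1 + 2 ^ m.-1)%N by rewrite -exp2S prednK.
have i2 := iota2 m0.
set z := zeta m.+1 in i2 *; set h := (2 ^ m.-1)%N in NN hr ha i2 *.
set l := (n %/ 2)%N in ha *.
set c : int := (-1) ^+ s * 2 ^+ l.
have DX : \sum_(t < 2 ^ m) (a t)%:~R * z ^+ t = c%:~R * z ^+ r * (1 + (-1) ^+ b * z ^+ h).
  rewrite NN (sum_split h (fun t => (a t)%:~R * z ^+ t)).
  rewrite (eq_bigr (fun t : 'I_h => (c * (t == r :> nat)%:R)%:~R * z ^+ t)); last first.
    by move=> t _; rewrite (ha t (ltn_ord t)).1.
  rewrite [X in _ + X](eq_bigr (fun t : 'I_h => (((-1) ^+ b * c) * (t == r :> nat)%:R)%:~R * z ^+ (t + h))); last first.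
    by move=> t _ /=; rewrite (ha t (ltn_ord t)).2 /c exprD; congr (_%:~R * _); ring.
  rewrite sum_single // (sum_single _ (fun t => z ^+ (t + h)) hr) exprD [((-1) ^+ b * c)%:~R]intrM (rmorph_sign _ b); ring.
rewrite DX.
have zc : z * z^* = 1 by apply: (zconj (N := 2 ^ m)); [rewrite expn_gt0 | exact: zetaN].
have ic : (z ^+ h)^* = - z ^+ h by rewrite (zconjE (N := 2) _ i2) // expr1.
have cE : c%:~R = (-1) ^+ s * 2 ^+ l :> algC by rewrite /c rmorphM rmorph_sign rmorphXn.
rewrite -(sqrCK (normr_ge0 _)) normCK; congr sqrtC.
have e1 : (z ^+ h) ^+ 2 = -1 := i2.
have e2 : ((-1) ^+ b) ^+ 2 = 1 :> algC := sqrr_sign _ _.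
have e3 : ((-1) ^+ s) ^+ 2 = 1 :> algC := sqrr_sign _ _.
have e4 : (z ^+ r) * (z^* ^+ r) = 1 by rewrite -exprMn zc expr1n.
have c2 : (2 : algC)^* = 2 by exact: (rmorph_nat _ 2).
rewrite cE !rmorphM /= rmorph_sign !rmorphXn /= c2 rmorphD /= conjC1 rmorphM /= rmorph_sign ic.
have -> : n = (l * 2 + 1)%N by rewrite /l {1}(divn_eq n 2) modn2 no.
transitivity (((-1) ^+ s) ^+ 2 * (2 ^+ l) ^+ 2 * (z ^+ r * z^* ^+ r) *
   (1 - ((-1) ^+ b) ^+ 2 * (z ^+ h) ^+ 2) :> algC); first by ring.
by rewrite e1 e2 e3 e4 -exprM exprD expr1; ring.
Qed.
Lemma sum_single_int N r (G : nat -> int) : (r < N)%N ->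
  \sum_(t < N) G t * (t == r :> nat)%:R = G r.
Proof.
move=> hr; rewrite (bigD1 (Ordinal hr)) //= eqxx mulr1 big1 ?addr0 // => i hi.
rewrite (_ : (i == r :> nat) = false) ?mulr0 //.
by apply: contraNF hi => /eqP hir; apply/eqP/val_inj.
Qed.

Lemma Hinv m (a : nat -> int) t : (t < 2 ^ m)%N ->
  \sum_(i < 2 ^ m) sylv m t i * (\sum_(t' < 2 ^ m) sylv m i t' * a t') = (2 ^ m)%:R * a t.
Proof.
move=> ht.
under eq_bigr => i _ do rewrite mulr_sumr.
rewrite exchange_big /=.
rewrite (eq_bigr (fun t' : 'I_(2 ^ m) => a t' * ((2 ^ m)%:R * (t' == t :> nat)%:R))); last first.
  move=> t' _; rewrite -(sylv_orth (ltn_ord t') ht) mulr_sumr; apply: eq_bigr => i _.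
  by rewrite (sylv_sym m i t') (sylv_sym m t i); ring.
under eq_bigr => t' _ do rewrite mulrA.
by rewrite (sum_single_int (fun t0 => a t0 * (2 ^ m)%:R)) // mulrC.
Qed.

Lemma Hinj m (a b : nat -> int) :
  (forall i, (i < 2 ^ m)%N -> \sum_(t < 2 ^ m) sylv m i t * a t = \sum_(t < 2 ^ m) sylv m i t * b t) ->
  forall t, (t < 2 ^ m)%N -> a t = b t.
Proof.
move=> e t ht; apply: (@mulfI _ (2 ^ m)%:R); first by rewrite pnatr_eq0 expn_eq0.
rewrite -!Hinv //; apply: eq_bigr => i _; by rewrite e.
Qed.

Lemma Hv_even m (a : nat -> int) r c : (r < 2 ^ m)%N ->
  (forall t, (t < 2 ^ m)%N -> a t = c * (t == r)%:R) ->
  forall i, (i < 2 ^ m)%N -> \sum_(t < 2 ^ m) sylv m i t * a t = c * sylv m r i.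
Proof.
move=> hr ha i hi.
rewrite (eq_bigr (fun t : 'I_(2 ^ m) => (sylv m i t * c) * (t == r :> nat)%:R)).
  by rewrite (sum_single_int (fun t => sylv m i t * c)) // mulrC sylv_sym.
by move=> t _; rewrite ha // mulrA.
Qed.

Lemma Hv_odd m (a : nat -> int) r (sg tg : int) : (r < 2 ^ m)%N ->
  (forall t, (t < 2 ^ m)%N -> a t = sg * (t == r)%:R /\ a (t + 2 ^ m)%N = tg * (t == r)%:R) ->
  forall i, (i < 2 ^ m)%N ->
    \sum_(t < 2 ^ m.+1) sylv m.+1 i t * a t = (sg + tg) * sylv m r i /\
    \sum_(t < 2 ^ m.+1) sylv m.+1 (i + 2 ^ m) t * a t = (sg - tg) * sylv m r i.
Proof.
move=> hr ha i hi; set h := (2 ^ m)%N in hr ha hi *.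
have imod : (i %% h = i)%N by rewrite modn_small.
have ihmod : ((i + h) %% h = i)%N by rewrite modnDr modn_small.
rewrite exp2S -/h (sum_split h (fun t => sylv m.+1 i t * a t)) (sum_split h (fun t => sylv m.+1 (i + h) t * a t)).
have L : forall x, \sum_(t < h) sylv m.+1 x t * a t = sg * sylv m r (x %% h)%N.
  move=> x; rewrite (eq_bigr (fun t : 'I_h => (sylv m (x %% h)%N t * sg) * (t == r :> nat)%:R)).
    by rewrite (sum_single_int (fun t => sylv m (x %% h)%N t * sg)) // mulrC sylv_sym.
  by move=> t _; rewrite sylv_lo // (ha t (ltn_ord t)).1 mulrA.
have R : forall x, \sum_(t < h) sylv m.+1 x (t + h)%N * a (t + h)%N =
    (if (h <= x)%N then -1 else 1) * tg * sylv m r (x %% h)%N.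
  move=> x; rewrite (eq_bigr (fun t : 'I_h =>
     ((if (h <= x)%N then -1 else 1) * sylv m (x %% h)%N t * tg) * (t == r :> nat)%:R)).
    rewrite (sum_single_int (fun t => (if (h <= x)%N then -1 else 1) * sylv m (x %% h)%N t * tg)) //.
    by rewrite sylv_sym; ring.
  by move=> t _; rewrite sylv_hi // (ha t (ltn_ord t)).2 !mulrA.
rewrite !L !R imod ihmod leq_addl (leqNgt h i) hi /=; split; ring.
Qed.
Lemma sylv_pm m r c : sylv m r c = 1 \/ sylv m r c = -1.
Proof. by have /eqP := sylv_sq m r c; rewrite sqrf_eq1 => /orP[]/eqP ->; [left|right]. Qed.

Lemma normW m r i s l :
  `|((-1) ^+ s * 2 ^+ l * sylv m r i)%:~R : algC| = 2 ^+ l.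
Proof.
rewrite !rmorphM rmorph_sign rmorphXn /= !normrM normrX normrN1 expr1n mul1r.
rewrite normrX (_ : `|2%:~R| = 2 :> algC); last by rewrite normr_nat.
by case: (sylv_pm m r i) => ->; rewrite ?rmorphN rmorph1 ?normrN normr1 mulr1.
Qed.

Theorem even_part n K (K0 : (0 < K)%N) (f : Vn n -> 'I_(2 ^ K.+1)) : ~~ odd n ->
  (gbent f <->
        ((forall i, (i < 2 ^ K)%N -> bent (gi f i)) /\
         (forall u : Vn n, exists r, exists s : bool, (r < 2 ^ K)%N /\
            forall i, (i < 2 ^ K)%N ->
              walsh (gi f i) u = (-1) ^+ s * 2 ^+ (n %/ 2) * sylv K r i))).
Proof.
move=> ne.
have WB : forall u, `|gwalsh f u| = sqrtC (2 ^+ n) -> exists r, exists s : bool, (r < 2 ^ K)%N /\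
     forall i, (i < 2 ^ K)%N -> walsh (gi f i) u = (-1) ^+ s * 2 ^+ (n %/ 2) * sylv K r i.
  move=> u hu; rewrite gwalsh_dec in hu.
  have [r [s [hr ha]]] := fwd_even K0 ne hu.
  exists r, (odd s); split => // i hi.
  by rewrite walsh_dec // (Hv_even hr ha hi) signr_odd.
split.
  move=> hg; have hW := fun u => WB u (hg u); split => // i hi u.
  have [r [s [hr e]]] := hW u.
  by rewrite (e i hi) normW -{2}(divnK (_ : (2 %| n)%N)) ?dvdn2 // sqrt2pow.
move=> [_ hW] u; have [r [s [hr hWu]]] := hW u.
rewrite gwalsh_dec; apply: bwd_even => //; exists r, s; split => //.
apply: Hinj => i hi.
rewrite -walsh_dec // hWu //.
by rewrite (Hv_even (a := fun t => (-1) ^+ s * 2 ^+ (n %/ 2)%N * (t == r)%:R) (c := (-1) ^+ s * 2 ^+ (n %/ 2)%N) hr _ hi).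
Qed.
Lemma inlist (x sv : int) (s : bool) : sv = 1 \/ sv = -1 -> (-1) ^+ s * x * sv \in [:: 0; x; - x].
Proof.
by move=> [->|->]; case: s; rewrite !inE ?expr1 ?expr0 ?mulr1 ?mul1r ?mulN1r ?mulrN1 ?opprK eqxx ?orbT.
Qed.

Lemma half_odd n : odd n -> ((n + 1) %/ 2 = n %/ 2 + 1)%N.
Proof. by move=> no; rewrite {1}(divn_eq n 2) modn2 no -addnA divnMDl. Qed.

Theorem odd_part n M (f : Vn n -> 'I_(2 ^ M.+2)) : odd n ->
  (gbent f <->
        ((forall i, (i < 2 ^ M.+1)%N -> semibent (gi f i)) /\
         (forall u : Vn n, exists r, exists s : bool, (r < 2 ^ M)%N /\
            ((forall i, (i < 2 ^ M)%N ->
                walsh (gi f i) u = (-1) ^+ s * 2 ^+ ((n + 1) %/ 2) * sylv M r i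
                /\ walsh (gi f (i + 2 ^ M)) u = 0)
             \/
             (forall i, (i < 2 ^ M)%N ->
                walsh (gi f i) u = 0
                /\ walsh (gi f (i + 2 ^ M)) u
                   = (-1) ^+ s * 2 ^+ ((n + 1) %/ 2) * sylv M r i))))).
Proof.
move=> no.
have K0 : (0 < M.+1)%N by [].
have hh := half_odd no.
set l := (n %/ 2)%N in hh.
rewrite hh.
set h := (2 ^ M)%N.
have NN : (2 ^ M.+1 = h + h)%N by rewrite exp2S.
have WB : forall u, `|gwalsh f u| = sqrtC (2 ^+ n) -> exists r, exists s : bool, (r < h)%N /\
   ((forall i, (i < h)%N -> walsh (gi f i) u = (-1) ^+ s * 2 ^+ (l + 1) * sylv M r i
                /\ walsh (gi f (i + h)) u = 0) \/
    (forall i, (i < h)%N -> walsh (gi f i) u = 0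
                /\ walsh (gi f (i + h)) u = (-1) ^+ s * 2 ^+ (l + 1) * sylv M r i)).
  move=> u hu; rewrite gwalsh_dec in hu.
  have [r [s [b [hr ha]]]] := fwd_odd K0 no hu.
  rewrite /= -/l -/h in hr ha.
  have hv := Hv_odd hr ha.
  exists r, (odd s); split => //.
  have hiN : forall i, (i < h)%N -> (i < 2 ^ M.+1)%N by move=> i hi; rewrite NN ltn_addr.
  have hiN' : forall i, (i < h)%N -> (i + h < 2 ^ M.+1)%N by move=> i hi; rewrite NN ltn_add2r.
  rewrite signr_odd.
  have sb : (-1) ^+ (s + b)%N = (-1) ^+ s * (-1) ^+ (odd b) :> int by rewrite signr_odd exprD.
  case: (boolP (odd b)) => ob; [right|left] => i hi;
    (rewrite (walsh_dec f u (hiN i hi)) (walsh_dec f u (hiN' i hi)); split;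
      [apply: etrans (hv i hi).1 _ | apply: etrans (hv i hi).2 _]);
    rewrite sb; case: (odd b) ob => // _; rewrite ?expr1 ?expr0 ?exprD ?expr1; ring.
split.
  move=> hg; have hW := fun u => WB u (hg u); split => // i hi u.
  rewrite /semibent hh.
  have [r [s [hr [e|e]]]] := hW u.
  - have [ih|ih] := ltnP i h.
      by rewrite (e i ih).1 inlist //; exact: sylv_pm.
    have -> : i = ((i - h) + h)%N by rewrite subnK.
    by rewrite (e (i - h)%N _).2 ?inE ?eqxx //; move: hi; rewrite NN; lia.
  - have [ih|ih] := ltnP i h.
      by rewrite (e i ih).1 ?inE ?eqxx.
    have -> : i = ((i - h) + h)%N by rewrite subnK.
    by rewrite (e (i - h)%N _).2 ?inlist //; [exact: sylv_pm | move: hi; rewrite NN; lia].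
move=> [_ hW] u; have [r [s [hr hWu]]] := hW u.
have key : forall b : nat,
   (forall i, (i < h)%N ->
      walsh (gi f i) u = ((-1) ^+ s * 2 ^+ l + (-1) ^+ (s + b)%N * 2 ^+ l) * sylv M r i /\
      walsh (gi f (i + h)) u = ((-1) ^+ s * 2 ^+ l - (-1) ^+ (s + b)%N * 2 ^+ l) * sylv M r i) ->
   `|gwalsh f u| = sqrtC (2 ^+ n).
  move=> b hb.
  pose a' t : int := if (t < h)%N then (-1) ^+ s * 2 ^+ l * (t == r)%:R
                     else (-1) ^+ (s + b)%N * 2 ^+ l * ((t - h)%N == r)%:R.
  have ha' : forall t, (t < h)%N -> a' t = (-1) ^+ s * 2 ^+ l * (t == r)%:R /\
                 a' (t + h)%N = (-1) ^+ (s + b)%N * 2 ^+ l * (t == r)%:R.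
    move=> t ht; rewrite /a' ht addnK (_ : (t + h < h)%N = false) //.
    by rewrite ltnNge leq_addl.
  have hv := Hv_odd hr ha'.
  have eq : forall t, (t < 2 ^ M.+1)%N -> cc f u t = a' t.
    apply: Hinj => i hi; rewrite -walsh_dec //.
    have [ih|ih] := ltnP i h; first by rewrite (hv i ih).1 (hb i ih).1.
    have -> : i = ((i - h) + h)%N by rewrite subnK.
    have ih' : (i - h < h)%N by move: hi; rewrite NN; lia.
    by rewrite (hv _ ih').2 (hb _ ih').2.
  rewrite gwalsh_dec; apply: bwd_odd => //; exists r, s, b; split => // t ht.
  have htN : (t < 2 ^ M.+1)%N by rewrite NN ltn_addr.
  have htN' : (t + h < 2 ^ M.+1)%N by rewrite NN ltn_add2r.
  by rewrite !eq //; exact: ha'.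
case: hWu => e.
  apply: (key 0%N) => i hi; rewrite (e i hi).1 (e i hi).2 addn0 exprD expr1; split; ring.
apply: (key 1%N) => i hi; rewrite (e i hi).1 (e i hi).2 exprD exprD !expr1; split; ring.
Qed.
Unset Implicit Arguments.
Set Strict Implicit.

Theorem theorem1 (n k : nat) (hn : (1 <= n)%N) (hk : (2 <= k)%N)
    (f : Vn n -> 'I_(2 ^ k)) :
  (~~ odd n ->
     (gbent f <->
        ((forall i, (i < 2 ^ k.-1)%N -> bent (gi f i)) /\
         (forall u : Vn n, exists r, exists s : bool, (r < 2 ^ k.-1)%N /\
            forall i, (i < 2 ^ k.-1)%N ->
              walsh (gi f i) u = (-1) ^+ s * 2 ^+ (n %/ 2) * sylv k.-1 r i))))
  /\
  (odd n ->
     (gbent f <->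
        ((forall i, (i < 2 ^ k.-1)%N -> semibent (gi f i)) /\
         (forall u : Vn n, exists r, exists s : bool, (r < 2 ^ (k - 2))%N /\
            ((forall i, (i < 2 ^ (k - 2))%N ->
                walsh (gi f i) u = (-1) ^+ s * 2 ^+ ((n + 1) %/ 2) * sylv (k - 2) r i
                /\ walsh (gi f (i + 2 ^ (k - 2))) u = 0)
             \/
             (forall i, (i < 2 ^ (k - 2))%N ->
                walsh (gi f i) u = 0
                /\ walsh (gi f (i + 2 ^ (k - 2))) u
                   = (-1) ^+ s * 2 ^+ ((n + 1) %/ 2) * sylv (k - 2) r i)))))).
Proof.
case: k hk f => [|[|M]] // hk f.
split.
  by move=> ne; exact: (even_part (isT : (0 < M.+1)%N) f ne).
move=> no; rewrite (_ : (M.+2 - 2 = M)%N); last by rewrite subSS subSS subn0.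
exact: (odd_part f no).
Qed.
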